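(* Let $\sigma_0,\sigma_1,\dots,\sigma_6$ be linearly independent real bivariate polynomials, each of exact degree $k$ and without multiple factors. Then there is a polynomial $\sigma$ in the linear span of $\sigma_1,\dots,\sigma_6$ which has no multiple factors and differs from $\sigma_0$ by a factor of degree at least three, i.e. $\sigma=\gamma r$ and $\sigma_0=\gamma_0 r$ with $\gamma,\gamma_0$ relatively prime and $\deg\gamma_0\ge3$.
   Context: A polynomial has a multiple factor if it is divisible by $r^2$ for some polynomial $r$ of degree $\ge1$. *)

(* Defs.v *)
From HB Require Import structures.
From mathcomp Require Import all_boot all_order all_algebra.
From mathcomp Require Import reals.
From mathcomp Require Import mpoly.
Set Implicit Arguments. Unset Strict Implicit. Unset Printing Implicit Defensive.
Import GRing.Theory.
Local Open Scope ring_scope.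

(* total degree of a bivariate polynomial (degree of 0 is 0 by convention) *)
Definition tdeg (R : realType) (p : {mpoly R[2]}) : nat := (msize p).-1.

Definition mdvd (R : realType) (d p : {mpoly R[2]}) : Prop :=
  exists q : {mpoly R[2]}, p = q * d.

Definition has_multiple_factor (R : realType) (p : {mpoly R[2]}) : Prop :=
  exists r : {mpoly R[2]}, (1 <= tdeg r)%N /\ mdvd (r ^+ 2) p.

Definition rel_prime (R : realType) (p q : {mpoly R[2]}) : Prop :=
  forall d : {mpoly R[2]}, mdvd d p -> mdvd d q -> tdeg d = 0%N.

Definition lin_indep (R : realType) (m : nat) (s : 'I_m -> {mpoly R[2]}) : Prop :=
  forall c : 'I_m -> R, \sum_(i < m) c i *: s i = 0 -> forall i, c i = 0.

(* Main.v *)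
Require Import Defs.
From HB Require Import structures.
From mathcomp Require Import all_boot all_order all_algebra.
From mathcomp Require Import reals.
From mathcomp Require Import mpoly.
From Stdlib Require Import Classical FunctionalExtensionality.
From mathcomp Require Import zify ring.
Set Implicit Arguments. Unset Strict Implicit.
Import GRing.Theory.
Local Open Scope ring_scope.


Section Basics.
Variable R : realType.
Local Notation MP := {mpoly R[2]}.
Implicit Types p q d f g h : MP.

Lemma msize_tdeg p : p != 0 -> msize p = (tdeg p).+1.
Proof.
move=> pn0; rewrite /tdeg prednK // lt0n msize_poly_eq0 //.
Qed.

Lemma tdegC (c : R) : tdeg c%:MP = 0%N.
Proof. by rewrite /tdeg msizeC; case: (c != 0). Qed.

Lemma tdeg0 : tdeg (0 : MP) = 0%N.
Proof. by rewrite /tdeg msize0. Qed.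

Lemma tdeg0P p : tdeg p = 0%N -> p = (p@_0)%:MP.
Proof.
move=> h; apply: msize1_polyC; move: h; rewrite /tdeg.
by case: (msize p) => [|[]].
Qed.

Lemma tdegM p q : p != 0 -> q != 0 -> tdeg (p * q) = (tdeg p + tdeg q)%N.
Proof.
move=> pn0 qn0.
have h : mleadc p * mleadc q != 0.
  by rewrite mulf_neq0 // mleadc_eq0.
rewrite /tdeg msizeM_proper // !msize_tdeg //.
by rewrite addSn addnS.
Qed.

End Basics.

Section Classic.
Lemma ex_minP (T : Type) (P : T -> Prop) (m : T -> nat) :
  (exists x, P x) -> exists x, P x /\ forall y, P y -> (m x <= m y)%N.
Proof.
move=> [x0 Px0].
suff H : (forall n x, (m x <= n)%N -> P x ->
   exists x, P x /\ forall y, P y -> (m x <= m y)%N).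
  exact: (H _ x0 (leqnn _) Px0).
elim=> [|n IH] x hx Px.
  exists x; split=> // y _; by move: hx; rewrite leqn0 => /eqP ->.
case: (classic (exists y, P y /\ (m y < m x)%N)) => [[y [Py lt]]|nex].
  apply: (IH y) => //; by rewrite -ltnS (leq_trans lt).
exists x; split=> // y Py; rewrite leqNgt; apply/negP => lt; apply: nex; by exists y.
Qed.

Lemma ex_maxP (T : Type) (P : T -> Prop) (m : T -> nat) (B : nat) :
  (exists x, P x) -> (forall x, P x -> (m x <= B)%N) ->
  exists x, P x /\ forall y, P y -> (m y <= m x)%N.
Proof.
move=> ex hB; have [x [Px hx]] := @ex_minP _ _ (fun x => (B - m x)%N) ex.
exists x; split=> // y Py; have := hx y Py; have := hB _ Py; have := hB _ Px.
move=> h1 h2 h3; lia.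
Qed.
End Classic.

Section Dvd.
Variable R : realType.
Local Notation MP := {mpoly R[2]}.
Implicit Types p q d f g h : MP.

Lemma mdvd_refl p : mdvd p p.
Proof. by exists 1; rewrite mul1r. Qed.

Lemma mdvd_trans d p q : mdvd d p -> mdvd p q -> mdvd d q.
Proof. by move=> [a ->] [b ->]; exists (b * a); rewrite mulrA. Qed.

Lemma mdvd_mull d p q : mdvd d p -> mdvd d (q * p).
Proof. by move=> [a ->]; exists (q * a); rewrite mulrA. Qed.

Lemma mdvd_mulr d p q : mdvd d p -> mdvd d (p * q).
Proof. by move=> h; rewrite mulrC; apply: mdvd_mull. Qed.

Lemma mdvd_mul d1 d2 p1 p2 : mdvd d1 p1 -> mdvd d2 p2 -> mdvd (d1 * d2) (p1 * p2).
Proof.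
move=> [a ->] [b ->]; exists (a * b).
by rewrite -!mulrA; congr (_ * _); rewrite mulrCA.
Qed.

Lemma mdvd_dvdl d p : mdvd d (d * p).
Proof. by exists p; rewrite mulrC. Qed.

Lemma mdvd_dvdr d p : mdvd d (p * d).
Proof. by exists p. Qed.

Lemma mdvd0 d : mdvd d 0.
Proof. by exists 0; rewrite mul0r. Qed.

Lemma mdvdD d p q : mdvd d p -> mdvd d q -> mdvd d (p + q).
Proof. by move=> [a ->] [b ->]; exists (a + b); rewrite mulrDl. Qed.

Lemma mdvdN d p : mdvd d p -> mdvd d (- p).
Proof. by move=> [a ->]; exists (- a); rewrite mulNr. Qed.

Lemma mdvdB d p q : mdvd d p -> mdvd d q -> mdvd d (p - q).
Proof. by move=> hp hq; apply: mdvdD => //; apply: mdvdN. Qed.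

Lemma mdvdZ d p (c : R) : mdvd d p -> mdvd d (c *: p).
Proof. by move=> [a ->]; exists (c *: a); rewrite scalerAl. Qed.

Lemma mdvd_sum (I : Type) (r : seq I) (F : I -> MP) d :
  (forall i, mdvd d (F i)) -> mdvd d (\sum_(i <- r) F i).
Proof.
move=> h; elim: r => [|a r IH]; first by rewrite big_nil; apply: mdvd0.
by rewrite big_cons; apply: mdvdD.
Qed.

Lemma mdvd_neq0 d p : mdvd d p -> p != 0 -> d != 0.
Proof. by move=> [a ->]; apply: contra => /eqP ->; rewrite mulr0. Qed.

Lemma mdvd_tdeg d p : mdvd d p -> p != 0 -> (tdeg d <= tdeg p)%N.
Proof.
move=> [a ->] pn0; have an0 : a != 0 by apply: contra pn0 => /eqP ->; rewrite mul0r.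
have dn0 : d != 0 by apply: contra pn0 => /eqP ->; rewrite mulr0.
by rewrite tdegM // leq_addl.
Qed.

Lemma mdvdC (c : R) p : c != 0 -> mdvd c%:MP p.
Proof.
move=> cn0; exists (c^-1 *: p).
by rewrite mulrC mul_mpolyC scalerA mulfV // scale1r.
Qed.

Lemma tdeg_neq0 p : (1 <= tdeg p)%N -> p != 0.
Proof. by apply: contraTneq => ->; rewrite tdeg0. Qed.

Lemma mdvd_cancel f a b : f != 0 -> mdvd (f * a) (f * b) -> mdvd a b.
Proof.
move=> fn0 [q]; rewrite mulrCA => /(mulfI fn0) ->; exact: mdvd_dvdr.
Qed.

Lemma tdeg0_const p : tdeg p = 0%N -> exists c : R, p = c%:MP.
Proof. by move/tdeg0P => ->; exists p@_0. Qed.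

Definition irr f := (1 <= tdeg f)%N /\
  forall g h, f = g * h -> tdeg g = 0%N \/ tdeg h = 0%N.

Lemma irr_neq0 f : irr f -> f != 0.
Proof. by move=> [h _]; apply: tdeg_neq0. Qed.

Lemma irr_dvd f g : irr f -> mdvd g f -> (1 <= tdeg g)%N -> mdvd f g.
Proof.
move=> [f1 firr] [h fE] g1.
have fn0 : f != 0 := tdeg_neq0 f1.
case: (firr h g fE) => [h0|]; last by move=> g0; rewrite g0 in g1.
have [c hc] := tdeg0_const h0.
have cn0 : c != 0.
  by apply: contraNneq fn0 => c0; rewrite fE hc c0 mul0r.
exists (c^-1)%:MP; rewrite fE hc mulrA -rmorphM mulVf // rmorph1 mul1r //.
Qed.

Lemma exists_irr p : (1 <= tdeg p)%N -> exists f, irr f /\ mdvd f p.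
Proof.
move: {2}(tdeg p) (leqnn (tdeg p)) => n; elim: n p => [|n IH] p hn h1.
  by move: (leq_trans h1 hn).
case: (classic (irr p)) => [ip|nip]; first by exists p; split=> //; apply: mdvd_refl.
have pn0 := tdeg_neq0 h1.
have [g [q [pE [g0 q0]]]] : exists g q, p = g * q /\ tdeg g <> 0%N /\ tdeg q <> 0%N.
  apply: NNPP => hne; apply: nip; split=> // g q pE.
  apply: NNPP => hor; apply: hne; exists g, q; split=> //.
  by split=> hh; apply: hor; [left|right].
have gn0 : g != 0 by apply: contraNneq pn0 => g00; rewrite pE g00 mul0r.
have qn0 : q != 0 by apply: contraNneq pn0 => q00; rewrite pE q00 mulr0.
have hg : (tdeg g <= n)%N.
  rewrite -ltnS (leq_trans _ hn) // pE tdegM // -addn1 leq_add2l lt0n.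
  by apply/eqP.
have g1 : (1 <= tdeg g)%N by rewrite lt0n; apply/eqP.
have [f [fi fd]] := IH g hg g1.
exists f; split=> //; apply: (mdvd_trans fd); rewrite pE; apply: mdvd_mulr; exact: mdvd_refl.
Qed.

End Dvd.


Section PP2.
Variable F : fieldType.
Local Notation A := {poly F}.
Local Notation P := {poly {poly F}}.

Lemma primeA (pi a b : A) : irreducible_poly pi -> pi %| a * b -> (pi %| a) \/ (pi %| b).
Proof.
move=> ip hab; case: (boolP (pi %| a)) => ha; [by left|right].
have cop : coprimep pi a by rewrite irreducible_poly_coprime.
by rewrite -(Gauss_dvdpr b cop).
Qed.

Definition Dv (pi : A) (Q : P) := exists G : P, Q = pi%:P * G.

Lemma Dv0 pi : Dv pi 0.
Proof. by exists 0; rewrite mulr0. Qed.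

Lemma DvD pi Q1 Q2 : Dv pi Q1 -> Dv pi Q2 -> Dv pi (Q1 + Q2).
Proof. by move=> [a ->] [b ->]; exists (a + b); rewrite mulrDr. Qed.

Lemma DvN pi Q : Dv pi Q -> Dv pi (- Q).
Proof. by move=> [a ->]; exists (- a); rewrite mulrN. Qed.

Lemma DvB pi Q1 Q2 : Dv pi Q1 -> Dv pi Q2 -> Dv pi (Q1 - Q2).
Proof. by move=> h1 h2; apply: DvD => //; apply: DvN. Qed.

Lemma DvMl pi Q H : Dv pi Q -> Dv pi (H * Q).
Proof. by move=> [a ->]; exists (H * a); rewrite mulrCA. Qed.

Lemma DvMr pi Q H : Dv pi Q -> Dv pi (Q * H).
Proof. by move=> h; rewrite mulrC; apply: DvMl. Qed.

Lemma Dv_coef pi Q i : Dv pi Q -> pi %| Q`_i.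
Proof. by move=> [G ->]; rewrite coefCM dvdp_mulIl. Qed.

Lemma Dv_mono pi (c : A) n : pi %| c -> Dv pi (c *: 'X^n).
Proof.
move=> /dvdpP [c' ->]; exists (c' *: 'X^n).
by rewrite mul_polyC scalerA mulrC.
Qed.

Lemma top_split (Q : P) : Q != 0 ->
  exists Q', Q = Q' + lead_coef Q *: 'X^((size Q).-1) /\ (size Q' < size Q)%N.
Proof.
move=> Qn0; exists (Q - lead_coef Q *: 'X^((size Q).-1)); split; first by rewrite subrK.
rewrite (polySpred Qn0) ltnS; apply/leq_sizeP => j hj.
rewrite coefB coefZ coefXn; case: eqP => [->|/eqP ne].
  by rewrite mulr1 lead_coefE subrr.
rewrite mulr0 subr0; apply/(leq_sizeP _ (size Q)) => //.
by rewrite (polySpred Qn0) ltn_neqAle eq_sym ne hj.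
Qed.

Lemma split_F pi (Q : P) : ~ Dv pi Q ->
  exists Q1 Q2, Q = Q1 + Q2 /\ Dv pi Q2 /\ ~~ (pi %| lead_coef Q1).
Proof.
move: {2}(size Q) (leqnn (size Q)) => n; elim: n Q => [|n IH] Q hn nD.
  by move: hn; rewrite leqn0 size_poly_eq0 => /eqP Q0; case: nD; rewrite Q0; apply: Dv0.
have Qn0 : Q != 0 by apply/eqP => Q0; apply: nD; rewrite Q0; apply: Dv0.
case: (boolP (pi %| lead_coef Q)) => hl; last first.
  by exists Q, 0; split; [rewrite addr0| split=> //; apply: Dv0].
have [Q' [QE hs]] := top_split Qn0.
have nD' : ~ Dv pi Q'.
  by move=> hD; apply: nD; rewrite QE; apply: DvD => //; apply: Dv_mono.
have hn' : (size Q' <= n)%N by rewrite -ltnS (leq_trans hs hn).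
have [Q1 [Q2 [E1 [D2 nl]]]] := IH Q' hn' nD'.
exists Q1, (Q2 + lead_coef Q *: 'X^((size Q).-1)); split.
  by rewrite {1}QE E1 addrA.
by split=> //; apply: DvD => //; apply: Dv_mono.
Qed.

Lemma CL pi (Fp Hh : P) : irreducible_poly pi -> Dv pi (Fp * Hh) -> ~ Dv pi Fp -> Dv pi Hh.
Proof.
move=> ip DFH nDF.
have [F1 [F2 [FE [D2 nl]]]] := split_F nDF.
have D1 : Dv pi (F1 * Hh).
  have -> : F1 * Hh = Fp * Hh - F2 * Hh by rewrite FE mulrDl addrK.
  by apply: DvB => //; apply: DvMr.
have F1n0 : F1 != 0 by apply: contraNneq nl => ->; rewrite lead_coef0 dvdp0.
clear DFH; move: {2}(size Hh) (leqnn (size Hh)) D1 => n; elim: n Hh => [|n IH] H hn D1.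
  by move: hn; rewrite leqn0 size_poly_eq0 => /eqP ->; apply: Dv0.
have [->|Hn0] := eqVneq H 0; first by apply: Dv0.
have [H' [HE hs]] := top_split Hn0.
have hl : pi %| lead_coef H.
  have := Dv_coef (size (F1 * H)).-1 D1; rewrite -lead_coefE lead_coefM.
  by case/(primeA ip) => // h; rewrite h in nl.
have DT := Dv_mono ((size H).-1) hl.
have D1' : Dv pi (F1 * H').
  have HE' : H' = H - lead_coef H *: 'X^((size H).-1) by rewrite {1}HE addrK.
  rewrite HE' mulrBr.
  by apply: DvB => //; apply: DvMl.
have hn' : (size H' <= n)%N by rewrite -ltnS (leq_trans hs hn).
by rewrite HE; apply: DvD => //; apply: IH.
Qed.

Definition primitive (Q : P) := forall pi, irreducible_poly pi -> ~ Dv pi Q.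

Lemma exists_irrA (c : A) : (1 < size c)%N -> exists pi, irreducible_poly pi /\ pi %| c.
Proof.
move=> hc.
have [pi [[hp dp] hmin]] := @ex_minP _ (fun d : A => (1 < size d)%N /\ d %| c) (fun d => size d)
  (ex_intro _ c (conj hc (dvdpp c))).
exists pi; split=> //; split=> // q qs qd.
have cn0 : c != 0 by rewrite -size_poly_gt0 (ltn_trans _ hc).
have pin0 : pi != 0 by rewrite -size_poly_gt0 (ltn_trans _ hp).
have qn0 : q != 0 by apply/eqP => q0; move: qd; rewrite q0 dvd0p (negbTE pin0).
have q1 : (1 < size q)%N.
  by move: qs qn0; rewrite -size_poly_eq0; case: (size q) => [|[]].
have := hmin q (conj q1 (dvdp_trans qd dp)) => h1.
have h2 := dvdp_leq pin0 qd.
rewrite -dvdp_size_eqp //; apply/eqP/anti_leq; by rewrite h1 h2.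
Qed.

Lemma content (G : P) : G != 0 ->
  exists (c : A) (G' : P), c != 0 /\ primitive G' /\ G = c%:P * G'.
Proof.
move: {2}(size (lead_coef G)) (leqnn (size (lead_coef G))) => n.
elim: n G => [|n IH] G hn Gn0.
  by move: hn; rewrite leqn0 size_poly_eq0 lead_coef_eq0 (negbTE Gn0).
case: (classic (primitive G)) => hp.
  by exists 1, G; split; [exact: oner_neq0| split=> //; rewrite mul1r].
have [pi [ip DG]] : exists pi, irreducible_poly pi /\ Dv pi G.
  apply: NNPP => hne; apply: hp => pi ip DG; apply: hne; by exists pi.
have [G1 GE] := DG.
have pin0 := irredp_neq0 ip.
have G1n0 : G1 != 0 by apply: contraNneq Gn0 => h; rewrite GE h mulr0.
have hs : (size (lead_coef G1) <= n)%N.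
  rewrite -ltnS (leq_trans _ hn) // GE lead_coefM lead_coefC size_mul //; last first.
    by rewrite lead_coef_eq0.
  have := ip.1; case: (size pi) => [|[|k]] //= _.
  by rewrite addSn ltnS leq_addl.
have [c1 [G' [c1n0 [pG' G1E]]]] := IH G1 hs G1n0.
exists (pi * c1), G'; split; first by rewrite mulf_neq0.
by split=> //; rewrite GE G1E polyCM mulrA.
Qed.

Lemma L_prim (Fp : P) (c : A) (Hh : P) : primitive Fp -> c != 0 ->
  (exists Q, c%:P * Hh = Q * Fp) -> exists Q, Hh = Q * Fp.
Proof.
move=> pF; move: {2}(size c) (leqnn (size c)) => n.
elim: n c Hh => [|n IH] c H hn cn0 [Q QE].
  by move: hn; rewrite leqn0 size_poly_eq0 (negbTE cn0).
case: (leqP (size c) 1) => hc.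
  have cE := size1_polyC hc.
  have c0n0 : c`_0 != 0 by apply: contraNneq cn0 => h; rewrite cE h.
  exists ((c`_0)^-1%:P%:P * Q); rewrite -mulrA -QE mulrA -!polyCM.
  by rewrite {2}cE -polyCM mulVf // !polyC1 mul1r.
have [pi [ip pd]] := exists_irrA hc.
have [c1 cE] := dvdpP _ _ pd.
have pin0 := irredp_neq0 ip.
have c1n0 : c1 != 0 by apply: contraNneq cn0 => h; rewrite cE h mul0r.
have DQ : Dv pi (Fp * Q).
  by exists (c1%:P * H); rewrite mulrC -QE cE polyCM mulrA [pi%:P * _]mulrC.
have [Q1 Q1E] := CL ip DQ (pF pi ip).
have E : c1%:P * H = Q1 * Fp.
  apply: (@mulfI _ pi%:P); first by rewrite polyC_eq0.
  by rewrite mulrA -polyCM [pi * c1]mulrC -cE QE Q1E mulrA.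
have hs : (size c1 <= n)%N.
  rewrite -ltnS (leq_trans _ hn) // cE size_mul //.
  have := ip.1; move: (size c1) (size pi) => a b; lia.
exact: IH hs c1n0 (ex_intro _ Q1 E).
Qed.


Definition constP (Q : P) := exists a : F, Q = a%:P%:P.
Definition irrP (Q : P) := ~ constP Q /\ forall G H, Q = G * H -> constP G \/ constP H.
Definition Div2 (D Q : P) := exists W, Q = W * D.

Lemma constP_size (Q : P) : constP Q -> (size Q <= 1)%N.
Proof. by move=> [a ->]; rewrite size_polyC leq_b1. Qed.

Lemma ideal_div (Fp Aa g0 h : P) :
  g0 != 0 ->
  (forall g, g != 0 -> (exists u v, g = u * Fp + v * Aa) -> (size g0 <= size g)%N) ->
  (exists u v, g0 = u * Fp + v * Aa) ->
  (exists u v, h = u * Fp + v * Aa) ->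
  exists Q, (lead_coef g0 ^+ Pdiv.Ring.rscalp h g0) *: h = Q * g0.
Proof.
move=> g0n0 hmin [u0 [v0 g0E]] [u [v hE]].
exists (Pdiv.Ring.rdivp h g0).
have E := Pdiv.ComRing.rdivp_eq g0 h.
move: E; set r := Pdiv.Ring.rmodp h g0; set Q := Pdiv.Ring.rdivp h g0;
  set k := Pdiv.Ring.rscalp h g0; rewrite -mul_polyC => E.
suff r0 : r = 0 by rewrite E r0 addr0.
apply/eqP; apply: contraT => rn0.
have hr : exists u v, r = u * Fp + v * Aa.
  exists ((lead_coef g0 ^+ k)%:P * u - Q * u0), ((lead_coef g0 ^+ k)%:P * v - Q * v0).
  have -> : r = (lead_coef g0 ^+ k)%:P * h - Q * g0.
    by rewrite E [Q * g0 + r]addrC addrK.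
  rewrite hE g0E !mulrDr !mulrBl !mulrA opprD addrACA //.
have := hmin r rn0 hr.
by rewrite leqNgt Pdiv.CommonRing.ltn_rmodp g0n0.
Qed.


Lemma PP2 (Fp Aa Bb : P) : irrP Fp -> Div2 Fp (Aa * Bb) -> Div2 Fp Aa \/ Div2 Fp Bb.
Proof.
move=> [nc irrF] [W ABE].
case: (classic (Div2 Fp Aa)) => [h|nA]; [by left| right].
have Fn0 : Fp != 0 by apply/eqP => F0; apply: nc; exists 0; rewrite F0.
have An0 : Aa != 0 by apply/eqP => A0; apply: nA; exists 0; rewrite A0 mul0r.
case: (leqP (size Fp) 1) => hs.
  set pi := Fp`_0.
  have FE : Fp = pi%:P by apply: size1_polyC.
  have pin0 : pi != 0 by apply: contraNneq Fn0 => h; rewrite FE h.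
  have ip : irreducible_poly pi.
    split.
      rewrite ltnNge; apply/negP => h; apply: nc; exists pi`_0.
      by rewrite FE {1}(size1_polyC h).
    move=> q qs qd; have [r rE] := dvdpP _ _ qd.
    have : Fp = r%:P * q%:P by rewrite FE rE polyCM.
    case/irrF => [[a ra]|[a qa]].
      have rE' : r = a%:P by apply: polyC_inj.
      have an0 : a != 0 by apply: contraNneq pin0 => h; rewrite rE rE' h mul0r.
      by rewrite rE rE' mul_polyC eqp_sym eqp_scale.
    have qE : q = a%:P by apply: polyC_inj.
    move: qs; rewrite qE size_polyC; have [a0|an0] := eqVneq a 0; last by [].
    by move=> _; move: pin0; rewrite rE qE a0 mulr0 eqxx.
  have D : Dv pi (Aa * Bb) by exists W; rewrite ABE FE mulrC.
  have nD : ~ Dv pi Aa by move=> [G GE]; apply: nA; exists G; rewrite GE FE mulrC.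
  have [G GE] := CL ip D nD.
  by exists G; rewrite GE FE mulrC.
have pF : primitive Fp.
  move=> pi ip [G GE]; have : Fp = pi%:P * G by [].
  case/irrF => [[a pa]|cG].
    have : pi = a%:P by apply: polyC_inj.
    by move=> h; have := ip.1; rewrite h size_polyC; case: (a != 0).
  have Gn0 : G != 0 by apply: contraNneq Fn0 => h; rewrite GE h mulr0.
  move: hs; rewrite GE size_Cmul ?irredp_neq0 //.
  by rewrite ltnNge constP_size.
pose S g := g != 0 /\ exists u v, g = u * Fp + v * Aa.
have SA : S Aa by split=> //; exists 0, 1; rewrite mul0r add0r mul1r.
have [g0 [[g0n0 g0I] hmin]] := @ex_minP _ S (fun g => size g) (ex_intro _ Aa SA).
have hmin' : forall g, g != 0 -> (exists u v, g = u * Fp + v * Aa) -> (size g0 <= size g)%N.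
  by move=> g gn0 gI; apply: hmin.
case: (leqP (size g0) 1) => hg.
  have [u0 [v0 g0E]] := g0I.
  have cn0 : g0`_0 != 0.
    by apply: contraNneq g0n0 => h; rewrite (size1_polyC hg) h polyC0.
  apply: (L_prim pF cn0).
  exists (u0 * Bb + v0 * W).
  rewrite -(size1_polyC hg) g0E mulrDl -(mulrA v0) ABE mulrDl !mulrA.
  by rewrite [u0 * Fp * Bb]mulrAC.
have lcn0 : lead_coef g0 != 0 by rewrite lead_coef_eq0.
have [c [gt [cn0 [pgt g0E]]]] := content g0n0.
have IF : exists u v, Fp = u * Fp + v * Aa by exists 1, 0; rewrite mul1r mul0r addr0.
have IA : exists u v, Aa = u * Fp + v * Aa by exists 0, 1; rewrite mul0r add0r mul1r.
have [Q QE] := ideal_div g0n0 hmin' g0I IF.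
have [Q' Q'E] := ideal_div g0n0 hmin' g0I IA.
have [W1 W1E] : exists W1, Fp = W1 * gt.
  apply: (L_prim pgt (expf_neq0 (Pdiv.Ring.rscalp Fp g0) lcn0)); exists (Q * c%:P).
  by rewrite mul_polyC QE g0E mulrA.
have [W2 W2E] : exists W2, Aa = W2 * gt.
  apply: (L_prim pgt (expf_neq0 (Pdiv.Ring.rscalp Aa g0) lcn0)); exists (Q' * c%:P).
  by rewrite mul_polyC Q'E g0E mulrA.
case: (irrF _ _ W1E) => [[a aE]|cg].
  have an0 : a != 0 by apply: contraNneq Fn0 => h; rewrite W1E aE h mul0r.
  apply: False_ind; apply: nA; exists (W2 * (a^-1)%:P%:P).
  by rewrite W2E W1E aE !mulrA -(mulrA W2) -!polyCM mulVf // !polyC1 mulr1.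
move: hg; rewrite g0E size_Cmul; last exact: cn0.
by rewrite ltnNge constP_size.
Qed.

End PP2.


Section Iso.
Variable R : realType.
Local Notation MP := {mpoly R[2]}.
Local Notation P2 := {poly {poly R}}.

Definition hX : 'I_2 -> P2 := fun i => if i == ord0 then ('X)%:P else 'X.
Definition Phi : MP -> P2 := mmap (polyC \o polyC) hX.
HB.instance Definition _ := GRing.RMorphism.copy Phi (mmap (polyC \o polyC) hX).

Lemma cfu0 : commr_rmorph (mpolyC 2 (R:=R)) 'X_0.
Proof. by move=> x; apply: mulrC. Qed.
Local Notation inner := (horner_morph cfu0).
Lemma cfu1 : commr_rmorph inner 'X_1.
Proof. by move=> x; apply: mulrC. Qed.
Definition Psi : P2 -> MP := horner_morph cfu1.
HB.instance Definition _ := GRing.RMorphism.copy Psi (horner_morph cfu1).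

Lemma PhiC (c : R) : Phi c%:MP = c%:P%:P.
Proof. by rewrite /Phi mmapC. Qed.

Lemma PhiX (i : 'I_2) : Phi 'X_i = hX i.
Proof. by rewrite /Phi mmapX mmap1U. Qed.

Lemma PsiC (c : R) : Psi c%:P%:P = c%:MP.
Proof. by rewrite /Psi horner_morphC /= horner_morphC. Qed.

Lemma Psi_innerX : Psi ('X)%:P = 'X_0.
Proof. by rewrite /Psi horner_morphC /= horner_morphX. Qed.

Lemma PsiX : Psi 'X = 'X_1.
Proof. by rewrite /Psi horner_morphX. Qed.

Lemma PsiPhi (p : MP) : Psi (Phi p) = p.
Proof.
have -> : Psi (Phi p) = \sum_(m <- msupp p) Psi (Phi (p@_m *: 'X_[m])).
  by rewrite {1}(mpolyE p) (raddf_sum Phi) (raddf_sum Psi).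
rewrite [RHS](mpolyE p); apply: eq_bigr => m _.
rewrite -mul_mpolyC !rmorphM /= PhiC PsiC; congr (_ * _).
rewrite mpolyXE_id !rmorph_prod; apply: eq_bigr => i _.
rewrite !rmorphXn /= PhiX; congr (_ ^+ _).
case: i => [[|[|k]] hk] //=.
  by rewrite /hX /= Psi_innerX; congr 'X_ _; apply: val_inj.
by rewrite /hX /= PsiX; congr 'X_ _; apply: val_inj.
Qed.

Lemma Phi_inner (c : {poly R}) : Phi (Psi c%:P) = c%:P.
Proof.
elim/poly_ind: c => [|c d IH]; first by rewrite !rmorph0.
rewrite polyCD polyCM !rmorphD !rmorphM /= IH Psi_innerX PhiX.
by rewrite PsiC PhiC.
Qed.

Lemma PhiPsi (Q : P2) : Phi (Psi Q) = Q.
Proof.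
elim/poly_ind: Q => [|Q c IH]; first by rewrite !rmorph0.
by rewrite !rmorphD !rmorphM /= IH PsiX PhiX Phi_inner.
Qed.

End Iso.


Section PPM.
Variable R : realType.
Local Notation MP := {mpoly R[2]}.
Implicit Types p q d f g h a b : MP.

Lemma Phi_inj : injective (@Phi R).
Proof. by move=> p q E; rewrite -(PsiPhi p) E PsiPhi. Qed.

Lemma PP f a b : irr f -> mdvd f (a * b) -> mdvd f a \/ mdvd f b.
Proof.
move=> [f1 firr] [Q QE].
have ip : irrP (Phi f).
  split.
    move=> [c cE]; have : f = c%:MP by rewrite -(PsiPhi f) cE PsiC.
    by move=> fE; move: f1; rewrite fE tdegC.
  move=> G H E.
  have : f = Psi G * Psi H by rewrite -(PsiPhi f) E rmorphM.
  case/firr => h.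
    by left; have [c cE] := tdeg0_const h; exists c; rewrite -(PhiPsi G) cE PhiC.
  by right; have [c cE] := tdeg0_const h; exists c; rewrite -(PhiPsi H) cE PhiC.
have D : Div2 (Phi f) (Phi a * Phi b) by exists (Phi Q); rewrite -!rmorphM QE.
case: (PP2 ip D) => [[W WE]|[W WE]]; [left|right]; exists (Psi W);
  by apply: Phi_inj; rewrite rmorphM /= PhiPsi.
Qed.

Lemma factor p : p != 0 -> exists (c : R) (l : seq MP), c != 0 /\
  (forall x, x \in l -> irr x) /\ p = c%:MP * \prod_(x <- l) x.
Proof.
move: {2}(tdeg p) (leqnn (tdeg p)) => n; elim: n p => [|n IH] p hn pn0.
  move: hn; rewrite leqn0 => /eqP /tdeg0_const [c cE].
  exists c, [::]; split; first by apply: contraNneq pn0 => h; rewrite cE h.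
  by split=> //; rewrite big_nil mulr1.
case: (leqP (tdeg p) 0) => h0.
  move: h0; rewrite leqn0 => /eqP /tdeg0_const [c cE].
  exists c, [::]; split; first by apply: contraNneq pn0 => h; rewrite cE h.
  by split=> //; rewrite big_nil mulr1.
have [f [fi [q qE]]] := exists_irr h0.
have fn0 := irr_neq0 fi.
have qn0 : q != 0 by apply: contraNneq pn0 => h; rewrite qE h mul0r.
have hq : (tdeg q <= n)%N.
  have := fi.1; move: hn; rewrite qE tdegM //; lia.
have [c [l [cn0 [il qE']]]] := IH q hq qn0.
exists c, (f :: l); split=> //; split.
  by move=> x; rewrite inE => /orP [/eqP ->|]; [exact: fi| exact: il].
by rewrite qE qE' big_cons -mulrA [_ * f]mulrC mulrA.
Qed.

Lemma PP_list f (c : R) (l : seq MP) : irr f -> c != 0 ->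
  (forall x, x \in l -> irr x) -> mdvd f (c%:MP * \prod_(x <- l) x) ->
  exists x, x \in l /\ mdvd x f /\ mdvd f x.
Proof.
move=> fi cn0; elim: l => [|x l IH] il.
  rewrite big_nil mulr1 => D.
  have := mdvd_tdeg D; rewrite tdegC mpolyC_eq0 => /(_ cn0); have := fi.1; lia.
rewrite big_cons mulrCA => D.
have ix : irr x by apply: il; rewrite inE eqxx.
case: (PP fi D) => h.
  exists x; split; first by rewrite inE eqxx.
  by split=> //; apply: irr_dvd => //; exact: fi.1.
have [y [yl hy]] : exists y, y \in l /\ mdvd y f /\ mdvd f y.
  by apply: IH => // z zl; apply: il; rewrite inE zl orbT.
by exists y; split=> //; rewrite inE yl orbT.
Qed.

End PPM.


Import Num.Theory.
Section Deriv.
Variable R : realType.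
Local Notation MP := {mpoly R[2]}.
Implicit Types p q d f g h a b : MP.

Lemma msize_le p k : (forall m, m \in msupp p -> (mdeg m < k)%N) -> (msize p <= k)%N.
Proof.
move=> h; rewrite msizeE big_seq; apply: (big_ind (fun x => x <= k)%N) => //.
by move=> x y hx hy; rewrite geq_max hx hy.
Qed.

Lemma deriv_tdeg p (i : 'I_2) : mderiv i p != 0 -> (tdeg (mderiv i p) < tdeg p)%N.
Proof.
move=> dn0.
have pn0 : p != 0 by apply: contraNneq dn0 => ->; rewrite mderiv0.
have h : (msize (mderiv i p) <= (msize p).-1)%N.
  apply: msize_le => m; rewrite mcoeff_msupp mcoeff_mderiv => hm.
  have hm' : (m + U_(i))%MM \in msupp p.
    by rewrite mcoeff_msupp; apply: contraNneq hm => ->; rewrite mul0rn.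
  have := msize_mdeg_lt hm'; rewrite mdegD mdeg1 addn1.
  by case: (msize p).
move: h; rewrite !msize_tdeg //=; lia.
Qed.

Lemma irr_deriv f (i : 'I_2) : irr f -> mdvd f (mderiv i f) -> mderiv i f = 0.
Proof.
move=> fi D; apply/eqP; apply: contraT => dn0.
have := mdvd_tdeg D dn0; have := deriv_tdeg dn0; lia.
Qed.

Lemma deriv0_const p : (forall i : 'I_2, mderiv i p = 0) -> tdeg p = 0%N.
Proof.
move=> h; suff : (msize p <= 1)%N by rewrite /tdeg; case: (msize p) => [|[]].
apply: msize_le => m mp; rewrite ltnS leqn0 mdeg_eq0; apply/eqP/mnmP => i.
rewrite mnm0E; apply/eqP; rewrite -leqn0 leqNgt; apply/negP => hi.
have le : (U_(i) <= m)%MM.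
  by apply/mnm_lepP => j; rewrite mnm1E; case: eqP => [<-|] //.
have := congr1 (mcoeff (m - U_(i))%MM) (h i).
rewrite mcoeff_mderiv submK // mcoeff0 => /eqP; rewrite mulrn_eq0 /=.
by move: mp; rewrite mcoeff_msupp => /negbTE ->.
Qed.

Lemma sq_deriv f s (i : 'I_2) : mdvd (f ^+ 2) s -> mdvd f (mderiv i s).
Proof.
move=> [h ->]; rewrite mderivM expr2 mderivM.
apply: mdvdD; first by apply: mdvd_mull; apply: mdvd_mull; apply: mdvd_refl.
by apply: mdvd_mull; apply: mdvdD; [apply: mdvd_mull| apply: mdvd_mulr]; apply: mdvd_refl.
Qed.

Lemma tdegX (i : 'I_2) : tdeg ('X_i : MP) = 1%N.
Proof. by rewrite /tdeg msizeX mdeg1. Qed.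

Lemma mf0 : has_multiple_factor (0 : MP).
Proof. by exists 'X_0; split; [rewrite tdegX| apply: mdvd0]. Qed.

Lemma sqfree_neq0 p : ~ has_multiple_factor p -> p != 0.
Proof. by move=> h; apply/eqP => p0; apply: h; rewrite p0; apply: mf0. Qed.

Lemma sqfree_dvd p d : ~ has_multiple_factor p -> mdvd d p -> ~ has_multiple_factor d.
Proof. by move=> h D [r [r1 Dr]]; apply: h; exists r; split=> //; apply: mdvd_trans D. Qed.

Lemma propto p q : ~ has_multiple_factor p ->
  (forall i : 'I_2, p * mderiv i q = mderiv i p * q) -> exists c : R, q = c *: p.
Proof.
move: {2}(tdeg p) (leqnn (tdeg p)) => n; elim: n p q => [|n IH] p q hn sf E.
  have pn0 := sqfree_neq0 sf.
  move: hn; rewrite leqn0 => /eqP /tdeg0_const [c pE].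
  have cn0 : c != 0 by apply: contraNneq pn0 => h; rewrite pE h.
  have : tdeg q = 0%N.
    apply: deriv0_const => i; have := E i; rewrite pE mderivC mul0r.
    by move/eqP; rewrite mulf_eq0 mpolyC_eq0 (negbTE cn0) => /eqP.
  move/tdeg0_const => [d ->]; exists (d / c).
  by rewrite pE -mul_mpolyC -rmorphM mulfVK.
have pn0 := sqfree_neq0 sf.
case: (leqP (tdeg p) 0) => h0.
  move: h0; rewrite leqn0 => /eqP /tdeg0_const [c pE].
  have cn0 : c != 0 by apply: contraNneq pn0 => h; rewrite pE h.
  have : tdeg q = 0%N.
    apply: deriv0_const => i; have := E i; rewrite pE mderivC mul0r.
    by move/eqP; rewrite mulf_eq0 mpolyC_eq0 (negbTE cn0) => /eqP.
  move/tdeg0_const => [d ->]; exists (d / c).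
  by rewrite pE -mul_mpolyC -rmorphM mulfVK.
have [f [fi [p1 pE]]] := exists_irr h0.
have fn0 := irr_neq0 fi.
have p1n0 : p1 != 0 by apply: contraNneq pn0 => h; rewrite pE h mul0r.
have nfp1 : ~ mdvd f p1.
  move=> [u uE]; apply: sf; exists f; split; first exact: fi.1.
  by exists u; rewrite pE uE expr2 mulrA.
case: (classic (mdvd f q)) => [[q1 qE]|nfq].
  have sf1 : ~ has_multiple_factor p1 by apply: sqfree_dvd sf _; rewrite pE; apply: mdvd_dvdl.
  have hn1 : (tdeg p1 <= n)%N.
    by have := fi.1; move: hn; rewrite pE tdegM //; lia.
  have E1 : forall i : 'I_2, p1 * mderiv i q1 = mderiv i p1 * q1.
    move=> i; have := E i; rewrite pE qE !mderivM => E'.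
    apply/eqP; rewrite -subr_eq0; apply/eqP; apply: (@mulfI _ (f ^+ 2)).
      by rewrite expf_neq0.
    rewrite mulr0; apply/eqP; move/eqP: E'; rewrite -subr_eq0 => /eqP E'.
    by rewrite -E'; apply/eqP; ring.
  have [c cE] := IH p1 q1 hn1 sf1 E1.
  by exists c; rewrite qE pE cE scalerAl.
apply: False_ind; have := fi.1; rewrite (deriv0_const (p := f)) //.
move=> i; apply: (irr_deriv fi).
have D1 : mdvd f (mderiv i p * q).
  by rewrite -E pE; apply: mdvd_mulr; apply: mdvd_mull; apply: mdvd_refl.
case: (PP fi D1) => [D2|/nfq //].
move: D2; rewrite pE mderivM => D2.
have D3 : mdvd f (p1 * mderiv i f).
  have -> : p1 * mderiv i f = mderiv i p1 * f + p1 * mderiv i f - mderiv i p1 * f.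
    by rewrite addrC addKr.
  by apply: mdvdB => //; apply: mdvd_mull; apply: mdvd_refl.
by case: (PP fi D3) => [/nfp1 //|//].
Qed.

End Deriv.


Import Num.Theory.
Section Dim.
Variable R : realType.
Local Notation MP := {mpoly R[2]}.

Definition ea (j : 'I_6) : nat := nth 0%N [:: 0; 1; 0; 2; 1; 0]%N j.
Definition eb (j : 'I_6) : nat := nth 0%N [:: 0; 0; 1; 0; 1; 2]%N j.
Definition mon (j : 'I_6) : 'X_{1..2} :=
  [multinom (if k == ord0 then ea j else eb j) | k < 2].

Lemma mdeg2 (m : 'X_{1..2}) : mdeg m = (m ord0 + m (lift ord0 ord0))%N.
Proof. by rewrite mdegE big_ord_recl big_ord1. Qed.

Lemma mon_surj (m : 'X_{1..2}) : (mdeg m < 3)%N -> exists j, m = mon j.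
Proof.
rewrite mdeg2 => h.
have mk : forall j, ea j = m ord0 -> eb j = m (lift ord0 ord0) -> m = mon j.
  move=> j h1 h2; apply/mnmP => k; rewrite /mon mnmE.
  case: k => [[|[|k]] hk] //=.
    by rewrite h1; congr (m _); apply: val_inj.
  by rewrite h2; congr (m _); apply: val_inj.
move: h; case E0: (m ord0) => [|[|[|a]]]; case E1: (m (lift ord0 ord0)) => [|[|[|b]]] //= _.
- by exists (@Ordinal 6 0 isT); apply: mk.
- by exists (@Ordinal 6 2 isT); apply: mk.
- by exists (@Ordinal 6 5 isT); apply: mk.
- by exists (@Ordinal 6 1 isT); apply: mk.
- by exists (@Ordinal 6 4 isT); apply: mk.
- by exists (@Ordinal 6 3 isT); apply: mk.
Qed.

Lemma dep7 (b : 'I_7 -> MP) : (forall i, (tdeg (b i) <= 2)%N) ->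
  exists lam : 'I_7 -> R, (exists i, lam i != 0) /\ \sum_i lam i *: b i = 0.
Proof.
move=> hb.
pose M : 'M[R]_(7, 6) := \matrix_(i, j) (b i)@_(mon j).
have kn0 : kermx M != 0.
  rewrite -mxrank_eq0 mxrank_ker; have := rank_leq_col M; lia.
have /rowV0Pn [v vK vn0] := kn0.
have vM : v *m M = 0 by apply/sub_kermxP.
exists (fun i => v 0 i); split.
  apply: NNPP => hne; apply/negP: vn0; apply/negPn/eqP/matrixP => i j.
  rewrite mxE (ord1 i); apply/eqP; apply: contraT => hh; exfalso; apply: hne; by exists j.
apply/mpolyP => m; rewrite mcoeff0 raddf_sum /=.
have [hm|hm] := leqP 3 (mdeg m).
  apply: big1 => i _; rewrite mcoeffZ.
  have : m \notin msupp (b i).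
    apply: msize_mdeg_ge; apply: leq_trans hm.
    by have := hb i; rewrite /tdeg; case: (msize (b i)) => [|k] //=.
  by rewrite mcoeff_msupp negbK => /eqP ->; rewrite mulr0.
have [j ->] := mon_surj hm.
have E := congr1 (fun A : 'M[R]_(1,6) => A 0 j) vM; rewrite !mxE in E.
rewrite -[RHS]E; apply: eq_bigr => i _; by rewrite mcoeffZ mxE.
Qed.

Lemma li_neq0 n (s : 'I_n -> MP) : lin_indep s -> forall j, s j != 0.
Proof.
move=> li j; apply/eqP => sj.
have := li (fun x => if x == j then 1 else 0) _ j; rewrite eqxx => h.
suff : (1 : R) = 0 by move/eqP; rewrite oner_eq0.
apply: h; rewrite (bigD1 j) //= eqxx sj scaler0 add0r big1 // => x /negbTE ->.
by rewrite scale0r.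
Qed.

Lemma slick (s : 'I_7 -> MP) (k : nat) (e : MP) : lin_indep s ->
  (forall i, tdeg (s i) = k) -> e != 0 -> (tdeg e <= 2)%N ->
  (forall i : 'I_6, mdvd (s ord0) (e * s (lift ord0 i))) -> False.
Proof.
move=> li hk en0 he hd.
have sn0 := li_neq0 li.
have [a aE] := fin_all_exists hd.
pose b (j : 'I_7) := if unlift ord0 j is Some i then a i else e.
have hb : forall j, (tdeg (b j) <= 2)%N.
  move=> j; rewrite /b; case: (unliftP ord0 j) => [i _|_] //.
  have [->|an0] := eqVneq (a i) 0; first by rewrite tdeg0.
  have := congr1 (@tdeg R) (aE i); rewrite !tdegM // hk hk => h.
  by move: he; rewrite -(leq_add2r k) h leq_add2r.
have [lam [[i0 li0] S0]] := dep7 hb.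
have S1 : e * \sum_j lam j *: s j = 0.
  transitivity (s ord0 * \sum_j lam j *: b j); last by rewrite S0 mulr0.
  rewrite !mulr_sumr; apply: eq_bigr => j _; rewrite -!scalerAr.
  case: (unliftP ord0 j) => [i ->|->]; rewrite /b ?liftK ?unlift_none.
    by rewrite aE mulrC.
  by rewrite mulrC.
move: S1 => /eqP; rewrite mulf_eq0 (negbTE en0) /= => /eqP S1.
by move: li0; rewrite (li lam S1 i0) eqxx.
Qed.

End Dim.


Import Num.Theory.
Lemma pick_good (N : nat) (J : finType) (P : nat -> J -> Prop) :
  (#|J| < N)%N ->
  (forall j m m', (m < N)%N -> (m' < N)%N -> P m j -> P m' j -> m = m') ->
  exists m, (m < N)%N /\ forall j, ~ P m j.
Proof.
move=> hJ huniq; apply: NNPP => hne.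
have H : forall x : 'I_N, exists j, P x j.
  move=> x; apply: NNPP => hx; apply: hne; exists x; split=> // j Pj.
  by apply: hx; exists j.
have [f hf] := fin_all_exists H.
have finj : injective f.
  move=> x y fxy; apply: val_inj.
  apply: (huniq (f x) x y (ltn_ord x) (ltn_ord y) (hf x)); rewrite fxy; exact: hf.
have := leq_card f finj; rewrite card_ord; lia.
Qed.

Section Main.
Variable R : realType.
Local Notation MP := {mpoly R[2]}.
Implicit Types p q d f g h a b : MP.

Lemma natr_neq0 (m : nat) : (0 < m)%N -> (m%:R : R) != 0.
Proof. by move=> h; rewrite pnatr_eq0 -lt0n. Qed.

Lemma natr_diff (m m' : nat) : m <> m' -> (m%:R - m'%:R : R) != 0.
Proof.
move=> ne; rewrite subr_eq0; apply/eqP => /eqP; rewrite eqr_nat => /eqP; exact: ne.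
Qed.

Definition closedU (U : ('I_6 -> R) -> Prop) :=
  forall c c' (a b : R), U c -> U c' -> U (fun i => a * c i + b * c' i).

Lemma closedU_ext U c c' (a b : R) x : closedU U -> U c -> U c' ->
  (forall i, x i = a * c i + b * c' i) -> U x.
Proof.
move=> cl Uc Uc' hx.
have -> : x = (fun i => a * c i + b * c' i) by apply: functional_extensionality.
exact: cl.
Qed.

Lemma avoid (n : nat) (U : nat -> ('I_6 -> R) -> Prop) :
  (forall j, closedU (U j)) -> (forall j, (j < n)%N -> exists c, ~ U j c) ->
  exists c, forall j, (j < n)%N -> ~ U j c.
Proof.
move=> cl; elim: n => [|n IH] hex; first by exists (fun _ => 0).
have [u hu] : exists u, forall j, (j < n)%N -> ~ U j u.
  by apply: IH => j hj; apply: hex; apply: ltnW.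
case: (classic (U n u)) => [Unu|nUnu]; last first.
  exists u => j; rewrite ltnS leq_eqVlt => /orP [/eqP ->|hj] //; exact: hu.
have [w hw] := hex n (ltnSn n).
pose cm (m : nat) := fun i => 1 * u i + (m.+1)%:R * w i.
have hc : (#|'I_n| < n.+1)%N by rewrite card_ord.
have huniq : forall (j : 'I_n) m m', (m < n.+1)%N -> (m' < n.+1)%N ->
    U j (cm m) -> U j (cm m') -> m = m'.
  move=> j m m' _ _ U1 U2; apply: NNPP => ne.
  have dn0 := natr_diff (m := m.+1) (m' := m'.+1) (fun e => ne (eq_add_S _ _ e)).
  have Uw : U j w.
    apply: (closedU_ext (a := (m.+1%:R - m'.+1%:R)^-1) (b := - (m.+1%:R - m'.+1%:R)^-1)
      (cl j) U1 U2) => i.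
    rewrite /cm mulNr -mulrBr; apply: (@mulfI _ (m.+1%:R - m'.+1%:R)) => //.
    rewrite mulrA mulfV // mul1r; ring.
  apply: (hu j (ltn_ord j)).
  apply: (closedU_ext (a := 1) (b := - m.+1%:R) (cl j) U1 Uw) => i.
  by rewrite /cm; ring.
have [m [hm hgood]] := pick_good (P := fun m (j : 'I_n) => U j (cm m)) hc huniq.
exists (cm m) => j; rewrite ltnS leq_eqVlt => /orP [/eqP ->|hj].
  move=> Unc; apply: hw.
  apply: (closedU_ext (a := (m.+1%:R)^-1) (b := - (m.+1%:R)^-1) (cl n) Unc Unu) => i.
  have mn0 : (m.+1%:R : R) != 0 by apply: natr_neq0.
  apply: (@mulfI _ m.+1%:R) => //; rewrite /cm mulNr -mulrBr mulrA mulfV // mul1r.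
  ring.
exact: (hgood (Ordinal hj)).
Qed.


Lemma mdvd_prod_mem x (l : seq MP) : x \in l -> mdvd x (\prod_(y <- l) y).
Proof.
elim: l => [|y l IH] //; rewrite inE big_cons => /orP [/eqP ->|xl].
  exact: mdvd_dvdl.
by apply: mdvd_mull; apply: IH.
Qed.

Lemma KI d g W H : g * H != 0 -> mdvd d (g * W) -> mdvd d (g * H) ->
  (forall f, irr f -> mdvd f W -> mdvd f H -> False) -> mdvd d g.
Proof.
move: {2}(tdeg d) (leqnn (tdeg d)) => n; elim: n d g => [|n IH] d g hn gHn0 D1 D2 hc.
  have dn0 := mdvd_neq0 D2 gHn0.
  move: hn; rewrite leqn0 => /eqP /tdeg0_const [c dE].
  rewrite dE; apply: mdvdC; apply: contraNneq dn0 => e; by rewrite dE e.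
have dn0 := mdvd_neq0 D2 gHn0.
case: (leqP (tdeg d) 0) => h0.
  move: h0; rewrite leqn0 => /eqP /tdeg0_const [c dE].
  rewrite dE; apply: mdvdC; apply: contraNneq dn0 => e; by rewrite dE e.
have [f [fi [d1 dE]]] := exists_irr h0.
have fn0 := irr_neq0 fi.
have gn0 : g != 0 by apply: contraNneq gHn0 => e; rewrite e mul0r.
have Hn0 : H != 0 by apply: contraNneq gHn0 => e; rewrite e mulr0.
have d1n0 : d1 != 0 by apply: contraNneq dn0 => e; rewrite dE e mul0r.
case: (classic (mdvd f g)) => [[g1 gE]|nfg].
  have g1n0 : g1 != 0 by apply: contraNneq gn0 => e; rewrite gE e mul0r.
  have hn1 : (tdeg d1 <= n)%N by have := fi.1; move: hn; rewrite dE tdegM //; lia.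
  have D1' : mdvd d1 (g1 * W).
    by apply: (@mdvd_cancel _ f); rewrite // [f * d1]mulrC -dE mulrA [f * g1]mulrC -gE.
  have D2' : mdvd d1 (g1 * H).
    by apply: (@mdvd_cancel _ f); rewrite // [f * d1]mulrC -dE mulrA [f * g1]mulrC -gE.
  have := IH d1 g1 hn1 (mulf_neq0 g1n0 Hn0) D1' D2' hc.
  by rewrite dE gE => D; apply: mdvd_mul => //; apply: mdvd_refl.
have Df : forall x, mdvd d x -> mdvd f x.
  by move=> x Dx; apply: mdvd_trans Dx; rewrite dE; apply: mdvd_dvdr.
case: (PP fi (Df _ D1)) => // fW.
case: (PP fi (Df _ D2)) => // fH.
by case: (hc f fi fW fH).
Qed.

End Main.


Import Num.Theory.
Section Final.
Variable R : realType.
Local Notation MP := {mpoly R[2]}.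

Definition lc (s : 'I_7 -> MP) (c : 'I_6 -> R) : MP := \sum_(i < 6) c i *: s (lift ord0 i).

Lemma lc_lin s c c' (a b : R) : lc s (fun i => a * c i + b * c' i) = a *: lc s c + b *: lc s c'.
Proof.
rewrite /lc !scaler_sumr -big_split; apply: eq_bigr => i _.
by rewrite scalerDl !scalerA.
Qed.

Lemma lc_basis s (i : 'I_6) : lc s (fun i' => (i' == i)%:R) = s (lift ord0 i).
Proof.
rewrite /lc (bigD1 i) //= eqxx scale1r big1 ?addr0 // => i' /negbTE ->.
by rewrite scale0r.
Qed.

Lemma main_sec (k : nat) (s : 'I_7 -> MP) :
  lin_indep s ->
  (forall i, tdeg (s i) = k) ->
  (forall i, ~ has_multiple_factor (s i)) ->
  exists sigma : MP,
    (exists c : 'I_6 -> R, sigma = \sum_(i < 6) c i *: s (lift ord0 i)) /\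
    ~ has_multiple_factor sigma /\
    exists gamma gamma0 r : MP,
      sigma = gamma * r /\ s ord0 = gamma0 * r /\
      rel_prime gamma gamma0 /\ (3 <= tdeg gamma0)%N.
Proof.
move=> li hk hsf.
have sn0 := li_neq0 li.
pose CD (d : MP) := mdvd d (s ord0) /\ forall i : 'I_6, mdvd d (s (lift ord0 i)).
have CD1 : CD 1 by split=> [|i]; [exists (s ord0)|exists (s (lift ord0 i))]; rewrite mulr1.
have CDb : forall d, CD d -> (tdeg d <= k)%N.
  by move=> d [D _]; rewrite -(hk ord0); apply: mdvd_tdeg D (sn0 _).
have [g [[gs0 gS] gmax]] := @ex_maxP _ CD (@tdeg R) k (ex_intro _ 1 CD1) CDb.
have [H s0E] := gs0.
have gn0 : g != 0 by apply: contraNneq (sn0 ord0) => e; rewrite s0E e mulr0.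
have Hn0 : H != 0 by apply: contraNneq (sn0 ord0) => e; rewrite s0E e mul0r.
have [w wE] := fin_all_exists gS.
have H3 : (3 <= tdeg H)%N.
  rewrite leqNgt; apply/negP => h2.
  apply: (slick li hk Hn0); first by move: h2; rewrite ltnS.
  by move=> i; exists (w i); rewrite wE s0E mulrCA mulrA.
have [cH [hl [cHn0 [ihl HE]]]] := factor Hn0.
pose U (j : nat) (c : 'I_6 -> R) := mdvd (g * nth 0 hl j) (lc s c).
have clU : forall j, closedU (U j).
  move=> j c c' a b U1 U2; rewrite /U lc_lin.
  by apply: mdvdD; apply: mdvdZ.
have Uprop : forall j, (j < size hl)%N -> exists c, ~ U j c.
  move=> j hj; apply: NNPP => hne.
  set x := nth 0 hl j.
  have xi : irr x by apply: ihl; apply: mem_nth.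
  have CDx : CD (g * x).
    split.
      rewrite s0E [g * x]mulrC; apply: mdvd_mul; last exact: mdvd_refl.
      by rewrite HE; apply: mdvd_mull; apply: mdvd_prod_mem; apply: mem_nth.
    move=> i; rewrite -lc_basis; apply: NNPP => hn; apply: hne.
    by exists (fun i' => (i' == i)%:R).
  have := gmax _ CDx; rewrite tdegM //; last exact: irr_neq0.
  by have := xi.1; lia.
have final : forall c, ~ has_multiple_factor (lc s c) ->
    (forall j, (j < size hl)%N -> ~ U j c) ->
    exists sigma : MP,
    (exists c : 'I_6 -> R, sigma = \sum_(i < 6) c i *: s (lift ord0 i)) /\
    ~ has_multiple_factor sigma /\
    exists gamma gamma0 r : MP,
      sigma = gamma * r /\ s ord0 = gamma0 * r /\
      rel_prime gamma gamma0 /\ (3 <= tdeg gamma0)%N.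
  move=> c sfc hU; exists (lc s c); split; first by exists c.
  split=> //.
  set Wc := \sum_(i < 6) c i *: w i.
  have sigW : lc s c = g * Wc.
    rewrite /lc /Wc mulr_sumr; apply: eq_bigr => i _.
    by rewrite wE -scalerAr mulrC.
  have sign0 := sqfree_neq0 sfc.
  have hc : forall f, irr f -> mdvd f Wc -> mdvd f H -> False.
    move=> f fi fW; rewrite HE => fH.
    have [x [xl [xf fx]]] := PP_list fi cHn0 ihl fH.
    have hj : (index x hl < size hl)%N by rewrite index_mem.
    apply: (hU _ hj); rewrite /U nth_index // sigW.
    by apply: mdvd_mul; [exact: mdvd_refl| exact: mdvd_trans xf fW].
  pose CD2 (r : MP) := mdvd r (lc s c) /\ mdvd r (s ord0).
  have CD21 : CD2 1 by split; [exists (lc s c)| exists (s ord0)]; rewrite mulr1.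
  have CD2b : forall r, CD2 r -> (tdeg r <= k)%N.
    by move=> r [_ D]; rewrite -(hk ord0); apply: mdvd_tdeg D (sn0 _).
  have [r [[rsig rs0] rmax]] := @ex_maxP _ CD2 (@tdeg R) k (ex_intro _ 1 CD21) CD2b.
  have rg : mdvd r g.
    apply: (@KI _ r g Wc H) => //; first by rewrite mulf_neq0.
      by rewrite -sigW.
    by rewrite mulrC -s0E.
  have [gamma gaE] := rsig; have [gamma0 ga0E] := rs0.
  have rn0 : r != 0 by apply: contraNneq (sn0 ord0) => e; rewrite ga0E e mulr0.
  have ga0n0 : gamma0 != 0 by apply: contraNneq (sn0 ord0) => e; rewrite ga0E e mul0r.
  exists gamma, gamma0, r; split=> //; split=> //; split.
    move=> d [u1 u1E] [u2 u2E].
    have dn0 : d != 0 by apply: contraNneq ga0n0 => e; rewrite u2E e mulr0.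
    have CDd : CD2 (d * r).
      split; [exists u1; rewrite gaE u1E mulrA | exists u2; rewrite ga0E u2E mulrA] => //.
    have := rmax _ CDd; rewrite tdegM //; lia.
  have [g2 g2E] := rg.
  have E : gamma0 = H * g2.
    apply: (@mulIf _ r) => //; rewrite -ga0E s0E g2E mulrA //.
  have g2n0 : g2 != 0 by apply: contraNneq gn0 => e; rewrite g2E e mul0r.
  rewrite E tdegM //; lia.
pose e0 := fun i : 'I_6 => ((i == ord0)%:R : R).
set p := lc s e0.
have pE : p = s (lift ord0 ord0) by rewrite /p /e0 lc_basis.
have sfp : ~ has_multiple_factor p by rewrite pE; apply: hsf.
case: (classic (forall j, (j < size hl)%N -> ~ U j e0)) => [h|h].
  exact: final e0 sfp h.
have [j0 [hj0 Uj0]] : exists j0, (j0 < size hl)%N /\ U j0 e0.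
  apply: NNPP => hne; apply: h => j hj Uj; apply: hne; by exists j.
have [d hd] := avoid clU Uprop.
set q := lc s d.
have nprop : ~ exists lam : R, q = lam *: p.
  move=> [lam qE]; apply: (hd j0 hj0); rewrite /U -/q qE.
  exact: mdvdZ.
have [i0 Ki0] : exists i0 : 'I_2, p * mderiv i0 q != mderiv i0 p * q.
  apply: NNPP => hne; apply: nprop; apply: propto sfp _ => i.
  apply/eqP; apply: contraT => hi; exfalso; apply: hne; by exists i.
set K := p * mderiv i0 q - mderiv i0 p * q.
have Kn0 : K != 0 by rewrite subr_eq0.
have [cK [kl [cKn0 [ikl KE]]]] := factor Kn0.
pose cm (m : nat) := fun i => 1 * e0 i + m%:R * d i.
have lcm : forall m, lc s (cm m) = p + m%:R *: q by move=> m; rewrite lc_lin scale1r.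
pose P (m : nat) (x : ('I_(size hl) + 'I_(size kl))%type) := match x with
  | inl j => U j (cm m)
  | inr l => exists f, irr f /\ mdvd (f ^+ 2) (lc s (cm m)) /\
               mdvd f (nth 0 kl l) /\ mdvd (nth 0 kl l) f end.
have hJ : (#|{: 'I_(size hl) + 'I_(size kl)}| < size hl + size kl + 1)%N by rewrite card_sum !card_ord addn1.
have huniq : forall x m m', (m < size hl + size kl + 1)%N -> (m' < size hl + size kl + 1)%N ->
    P m x -> P m' x -> m = m'.
  move=> [j|l] m m' _ _ P1 P2; apply: NNPP => ne; have dn0 := @natr_diff R _ _ ne.
    apply: (hd j (ltn_ord j)).
    apply: (closedU_ext (a := (m%:R - m'%:R)^-1) (b := - (m%:R - m'%:R)^-1)
      (clU j) P1 P2) => i.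
    rewrite /cm mulNr -mulrBr; apply: (@mulfI _ (m%:R - m'%:R)) => //.
    rewrite mulrA mulfV // mul1r; ring.
  have [f [fi [f1 [f2 f3]]]] := P1; have [f' [fi' [f1' [f2' f3']]]] := P2.
  have ff' : mdvd (f ^+ 2) (f' ^+ 2) by apply: mdvd_mul; apply: mdvd_trans f2 f3'.
  have Dq : mdvd (f ^+ 2) q.
    have D : mdvd (f ^+ 2) ((m%:R - m'%:R) *: q).
      have -> : (m%:R - m'%:R) *: q = lc s (cm m) - lc s (cm m') by rewrite !lcm scalerBl; ring.
      by apply: mdvdB => //; apply: mdvd_trans ff' f1'.
    have := mdvdZ ((m%:R - m'%:R)^-1) D; by rewrite scalerA mulVf // scale1r.
  apply: sfp; exists f; split; first exact: fi.1.
  have -> : p = lc s (cm m) - m%:R *: q by rewrite lcm addrK.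
  by apply: mdvdB => //; apply: mdvdZ.
have [m [hm hgood]] := pick_good hJ huniq.
apply: (final (cm m)); last first.
  by move=> j hj Uj; apply: (hgood (inl (Ordinal hj))).
move=> [r0 [r01 Dr0]].
have [f [fi fr]] := exists_irr r01.
have Df2 : mdvd (f ^+ 2) (lc s (cm m)) by apply: mdvd_trans Dr0; apply: mdvd_mul.
have Df1 : mdvd f (mderiv i0 (lc s (cm m))) by apply: sq_deriv.
have Df0 : mdvd f (lc s (cm m)) by apply: mdvd_trans Df2; rewrite expr2; apply: mdvd_dvdr.
have DK : mdvd f K.
  have -> : K = lc s (cm m) * mderiv i0 q - mderiv i0 (lc s (cm m)) * q.
    rewrite lcm mderivD mderivZ /K -!mul_mpolyC; ring.
  by apply: mdvdB; [apply: mdvd_mulr | apply: mdvd_mulr].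
move: DK; rewrite KE => DK.
have [x [xl [xf fx]]] := PP_list fi cKn0 ikl DK.
have hl' : (index x kl < size kl)%N by rewrite index_mem.
apply: (hgood (inr (Ordinal hl'))); exists f; split=> //; split=> //.
by rewrite /= nth_index.
Qed.

End Final.


Unset Implicit Arguments.
Import Num.Theory.

Theorem mainTheorem7 (R : realType) (k : nat) (s : 'I_7 -> {mpoly R[2]}) :
  lin_indep s ->
  (forall i, tdeg (s i) = k) ->
  (forall i, ~ has_multiple_factor (s i)) ->
  exists sigma : {mpoly R[2]},
    (exists c : 'I_6 -> R, sigma = \sum_(i < 6) c i *: s (lift ord0 i)) /\
    ~ has_multiple_factor sigma /\
    exists gamma gamma0 r : {mpoly R[2]},
      sigma = gamma * r /\ s ord0 = gamma0 * r /\
      rel_prime gamma gamma0 /\ (3 <= tdeg gamma0)%N.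
Proof.
exact: main_sec.
Qed.
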